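(* Let $n$ and $d$ be positive integers such that the largest prime $q_d$ smaller than $n/d$ exists and satisfies $q_d>n/(d+1)$, and let $\beta_d=n-dq_d$. Let $p^a$ ($p$ prime, $a\ge1$) be a prime power dividing $n$ with $p\ne q_d$. For each integer $\delta$ with $0\le\delta\le\beta_d$, let $N(\delta)$ be the number of integer solutions $(x,y)$ of $p^a x-q_d y=\delta$ with $x>0$ and $0\le y\le\lfloor d/2\rfloor$. Then $n$ satisfies the $N$-variation of Condition 1 with \[N=2+\sum_{\delta=0}^{\beta_d}N(\delta).\]
   Context: A positive integer $n$ satisfies the $N$-variation of Condition 1 if there exist $N$ different primes $p_1,\dots,p_N$ such that for every $1\le k\le n-1$, $\binom{n}{k}$ is divisible by at least one of $p_1,\dots,p_N$. *)

(* Defs.v *)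
From mathcomp Require Import all_boot.
Set Implicit Arguments. Unset Strict Implicit. Unset Printing Implicit Defensive.

Definition condition1_var (N n : nat) : Prop :=
  exists ps : seq nat,
    [/\ uniq ps, size ps = N, all prime ps &
        forall k, 0 < k < n -> has (fun p => p %| 'C(n, k)) ps].

(* N(delta) = #{(x,y) in Z^2 : pa*x - q*y = delta, x > 0, 0 <= y <= floor(d/2)}.
   Since pa >= 1 and y >= 0, any solution has 1 <= x <= delta + q*(d/2), so
   the set is enumerated over this finite box (with the equation written in nat
   without subtraction as pa*x = delta + q*y). *)
Definition Nsol (pa q d delta : nat) : nat :=
  \sum_(0 <= y < (d./2).+1)
    \sum_(1 <= x < (delta + q * d./2).+1) (pa * x == delta + q * y).

(* Main.v *)
Require Import Defs.
From mathcomp Require Import all_boot zify.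
Set Implicit Arguments. Unset Strict Implicit. Unset Printing Implicit Defensive.
Lemma logn_fact_ext q m N : prime q -> m <= N ->
  logn q m`! = \sum_(1 <= i < N.+1) m %/ q ^ i.
Proof.
move=> pq hmN; rewrite logn_fact // [RHS](big_cat_nat (n:=m.+1)) //=.
rewrite [X in _ + X]big1_seq ?addn0 // => i /andP[_]; rewrite mem_index_iota => /andP[hi _].
apply: divn_small;  apply: (leq_trans hi); apply: ltnW; apply: ltn_expl.
exact: prime_gt1.
Qed.

Lemma q_lemma q n k : prime q -> k <= n -> ~~ (q %| 'C(n, k)) -> k %% q <= n %% q.
Proof.
move=> pq hkn hC; rewrite leqNgt; apply/negP => hlt.
have q0 : 0 < q by exact: prime_gt0.
have hfact := bin_fact hkn.
have : logn q n`! = logn q k`! + logn q (n - k)`!.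
  rewrite -hfact lognM ?bin_gt0 ?muln_gt0 ?fact_gt0 // lognM ?fact_gt0 //.
  by rewrite [logn q 'C(n, k)]lognE (negbTE hC) !andbF.
rewrite !(logn_fact_ext pq (leqnn n)) (logn_fact_ext pq hkn)
        (logn_fact_ext pq (leq_subr k n)) -big_split /=.
have n0 : 0 < n.
  case: n hkn hlt {hC hfact} => //; rewrite leqn0 => /eqP ->; by rewrite mod0n.
rewrite (@big_ltn _ _ _ 1 n.+1) // (@big_ltn _ _ _ 1 n.+1) //; 
rewrite expn1 => heq.
have hq : q <= k %% q + (n - k) %% q.
  rewrite leqNgt; apply/negP => hs.
  have := modnDm k (n - k) q; rewrite modn_small // subnKC // => e.
  by move: hlt; rewrite -e ltnNge leq_addr.
have h1 : k %/ q + (n - k) %/ q < n %/ q.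
  by have := divnD k (n - k) q0; rewrite subnKC // hq addn1 => ->.
have h2 : \sum_(2 <= i < n.+1) (k %/ q ^ i + (n - k) %/ q ^ i) <= \sum_(2 <= i < n.+1) n %/ q ^ i.
  apply: leq_sum => i _.
  have qi : 0 < q ^ i by rewrite expn_gt0 q0.
  have := divnD k (n - k) qi; rewrite subnKC // => ->; exact: leq_addr.
move: heq h1 h2; lia.
Qed.
Lemma p_lemma p a n k : prime p -> p ^ a %| n -> 0 < k < n ->
  ~~ (p %| 'C(n, k)) -> p ^ a %| k.
Proof.
move=> pp hpn /andP[k0 kn] hC.
have n0 : 0 < n by apply: leq_trans kn.
have e := mul_bin_diag n k.-1; rewrite prednK // in e.
have Cp : 0 < 'C(n.-1, k.-1) by rewrite bin_gt0; move: k0 kn; clear; case: n => // n; case: k => // k; rewrite /= => _; lia.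
have Cp2 : 0 < 'C(n, k) by rewrite bin_gt0 ltnW.
rewrite pfactor_dvdn //.
have : logn p (n * 'C(n.-1, k.-1)) = logn p k by
  rewrite e lognM // [logn p 'C(n, k)]lognE (negbTE hC) !andbF addn0.
rewrite lognM // => <-.
move: hpn; rewrite pfactor_dvdn // => h; exact: leq_trans h (leq_addr _ _).
Qed.

Lemma bin_gt1 n k : 0 < k < n -> 1 < 'C(n, k).
Proof.
move=> /andP[k0 kn].
have h : 'C(k.+1, k) <= 'C(n, k) by apply: leq_bin2l.
by rewrite binSn in h; apply: leq_trans h; rewrite ltnS.
Qed.

Lemma sum_mul_split (F : nat -> nat) q m :
  \sum_(0 <= k < q * m) F k = \sum_(0 <= y < m) \sum_(0 <= d < q) F (q * y + d).
Proof.
elim: m => [|m IH]; first by rewrite muln0 !big_geq.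
rewrite big_nat_recr //= -IH mulnS addnC (big_cat_nat (n := q * m)) //=; last by rewrite leq_addr.
congr (_ + _).
rewrite -{1}(add0n (q * m)) big_addn addKn.
by apply: eq_bigr => i _; rewrite addnC.
Qed.

Lemma sum_restrict (P : nat -> bool) n M : (forall k, P k -> k < M) ->
  \sum_(0 <= k < n) P k <= \sum_(0 <= k < M) P k.
Proof.
move=> hP.
apply: (@leq_trans (\sum_(0 <= k < n + M) P k)).
  by rewrite [X in _ <= X](big_cat_nat (n := n)) ?leq_addr.
rewrite addnC [X in X <= _](big_cat_nat (n := M)) ?leq_addr //=.
rewrite [X in _ + X]big1_seq ?addn0 // => i /andP[_]; rewrite mem_index_iota => /andP[hi _].
case e: (P i) => //; move: (hP _ e); by rewrite ltnNge hi.
Qed.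

Lemma sum_ge_term (F : nat -> nat) m M x : m <= x < M ->
  F x <= \sum_(m <= i < M) F i.
Proof.
move=> /andP[h1 h2]; rewrite (big_cat_nat (n := x)) //=; last by apply: ltnW.
by rewrite [X in _ + X]big_ltn // addnCA leq_addr.
Qed.

Lemma pad_primes (s : seq nat) N : uniq s -> all prime s -> size s <= N ->
  exists t : seq nat, [/\ uniq t, size t = N, all prime t & {subset s <= t}].
Proof.
move=> us ps; move: {2}(N - size s) (erefl (N - size s)) => m; elim: m s us ps => [|m IH] s us ps hm hs.
  exists s; split => //; apply/eqP; rewrite eqn_leq hs /=; by move: hm => /eqP; rewrite subn_eq0.
have [r hr pr] := prime_above (\sum_(x <- s) x).
have rs : r \notin s.
  apply/negP => hin; move: hr; rewrite ltnNge => /negP; apply.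
  by rewrite (big_rem r hin) /= leq_addr.
have hlt : size s < N by rewrite -subn_gt0 hm.
have := IH (r :: s); rewrite /= rs us pr ps subnS hm hlt.
case/(_ isT isT erefl isT) => t [ut st pt sub].
exists t; split => // x hx; apply: sub; by rewrite inE hx orbT.
Qed.

Lemma arith1 n k A B C : k = A + B -> n = C + (n - C) -> A <= C -> B <= n - C ->
  n - k = C - A + (n - C - B).
Proof. lia. Qed.
Lemma arith2 d y : d./2 < y -> y <= d -> d - y <= d./2.
Proof. lia. Qed.

Lemma leq_sum_nat m M (F G : nat -> nat) : (forall i, m <= i < M -> F i <= G i) ->
  \sum_(m <= i < M) F i <= \sum_(m <= i < M) G i.
Proof.
move=> h; rewrite big_seq [X in _ <= X]big_seq; apply: leq_sum => i.
rewrite mem_index_iota; exact: h.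
Qed.

Unset Implicit Arguments.
Theorem mainTheorem15 (n d q p a : nat) :
  0 < n -> 0 < d ->
  (* q = q_d is the largest prime smaller than n/d *)
  prime q -> q * d < n -> (forall r, prime r -> r * d < n -> r <= q) ->
  (* q_d > n/(d+1) *)
  n < q * d.+1 ->
  prime p -> 0 < a -> p ^ a %| n -> p != q ->
  condition1_var
    (2 + \sum_(0 <= delta < (n - d * q).+1) Nsol (p ^ a) q d delta) n.
Proof.
move=> n0 d0 pq hqd hmax hn pp a0 hpa hpq.
have q0 : 0 < q := prime_gt0 pq.
have pa0 : 0 < p ^ a by rewrite expn_gt0 prime_gt0.
have hdq : d * q <= n by rewrite mulnC ltnW.
have hbq : n - d * q < q by move: hn; rewrite mulnS mulnC; lia.
have hnq : n = d * q + (n - d * q) by rewrite subnKC.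
have hmodn : n %% q = n - d * q by rewrite {1}hnq modnMDl modn_small.
have hdivn : n %/ q = d by rewrite {1}hnq divnMDl // divn_small // addn0.
pose P k := [&& 0 < k, k < n, ~~ (p %| 'C(n, k)), ~~ (q %| 'C(n, k)) & k %/ q <= d./2].
pose s := filter P (iota 0 n).
pose ps0 := undup (p :: q :: map (fun k => pdiv 'C(n, k)) s).
have count_bound : count P (iota 0 n) <=
    \sum_(0 <= delta < (n - d * q).+1) Nsol (p ^ a) q d delta.
  rewrite -sum1_count big_mkcond /=.
  have e1 : \sum_(i <- iota 0 n) (if P i then 1 else 0) = \sum_(0 <= k < n) P k.
    by rewrite /index_iota subn0; apply: eq_bigr => i _; case: (P i).
  rewrite e1.
  apply: (leq_trans (sum_restrict (M := q * (d./2).+1) _ _)).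
    by move=> k /and5P[_ _ _ _ hk]; rewrite mulnC -ltn_divLR.
  rewrite sum_mul_split /Nsol [X in _ <= X]exchange_big_nat /=.

  apply: leq_sum_nat => y /andP[_ hy].
  rewrite (big_cat_nat (n := (n - d * q).+1)) //=.
  rewrite [X in _ + X <= _]big1_seq ?addn0; last first.
    move=> i /andP[_]; rewrite mem_index_iota => /andP[hi1 hi2].
    case e : (P (q * y + i)) => //; case/and5P: e => _ hkn _ hqC _.
    have := q_lemma pq (ltnW hkn) hqC.
    by rewrite hmodn mulnC modnMDl modn_small // leqNgt hi1.
  apply: leq_sum_nat => del /andP[_ hdel].
  case e : (P (q * y + del)) => //; case/and5P: e => hk0 hkn hpC hqC _.
  have hdv := p_lemma pp hpa (introT andP (conj hk0 hkn)) hpC.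
  apply: (leq_trans _ (sum_ge_term (x := (q * y + del) %/ p ^ a) _ _)).
    by rewrite mulnC divnK // addnC eqxx.
  apply/andP; split.
    by rewrite divn_gt0 // dvdn_leq.
  apply: (leq_ltn_trans (leq_div _ _)); apply: (leq_ltn_trans _ (ltnSn _)).
  by rewrite addnC leq_add2l leq_mul2l (ltnSE hy) orbT.
have ups0 : uniq ps0 by exact: undup_uniq.
have pps0 : all prime ps0.
  apply/allP => x; rewrite mem_undup !inE => /orP[/eqP -> //|/orP[/eqP -> //|]].
  case/mapP => k; rewrite mem_filter => /andP[/and5P[k0 kn _ _ _] _] ->.
  by apply: pdiv_prime; apply: bin_gt1; rewrite k0 kn.
have sps0 : size ps0 <= 2 + \sum_(0 <= delta < (n - d * q).+1) Nsol (p ^ a) q d delta.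
  apply: leq_trans (size_undup _) _; rewrite /= size_map size_filter.
  by rewrite -add2n leq_add2l.
have [t [ut st pt sub]] := pad_primes ups0 pps0 sps0.
exists t; split => // k /andP[k0 kn].
suff [x xin xd] : exists2 x, x \in ps0 & x %| 'C(n, k).
  by apply/hasP; exists x => //; apply: sub.
case: (boolP (p %| 'C(n, k))) => hp.
  by exists p => //; rewrite mem_undup inE eqxx.
case: (boolP (q %| 'C(n, k))) => hq.
  by exists q => //; rewrite mem_undup !inE eqxx orbT.
have hkq := q_lemma pq (ltnW kn) hq; rewrite hmodn in hkq.
case: (leqP (k %/ q) d./2) => hy.
  exists (pdiv 'C(n, k)); last exact: pdiv_dvd.
  rewrite mem_undup !inE; apply/orP; right; apply/orP; right.
  apply/mapP; exists k => //; rewrite mem_filter mem_iota /= add0n kn andbT.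
  by rewrite /P k0 kn hp hq hy.
have hyd : k %/ q <= d by rewrite -hdivn leq_div2r // ltnW.
have hk := divn_eq k q.
have hyq : k %/ q * q <= d * q by rewrite leq_mul2r hyd orbT.
have hnk : n - k = (d - k %/ q) * q + (n - d * q - k %% q).
  by rewrite mulnBl; apply: arith1.
have hC : 'C(n, n - k) = 'C(n, k) by rewrite bin_sub // ltnW.
exists (pdiv 'C(n, k)); last exact: pdiv_dvd.
rewrite mem_undup !inE; apply/orP; right; apply/orP; right.
apply/mapP; exists (n - k); last by rewrite hC.
have hlt : n - k < n by rewrite ltn_subrL k0 n0.
rewrite mem_filter mem_iota /= add0n hlt andbT /P hC hp hq subn_gt0 kn hlt /=.
have e0 : (n - d * q - k %% q) %/ q = 0.
  by apply: divn_small; apply: (leq_ltn_trans _ hbq); apply: leq_subr.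
rewrite hnk divnMDl // e0 addn0; exact: arith2.

Qed.
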